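(* Let $A$ be a finite alphabet, $b\in A$ a letter, and $u$ a word over $A$ not ending with $b$. If $\vdash^*_{\{u\}}$ is not a well quasi-order on $L^{\epsilon}_{\vdash_{\{u\}}}$, then for every $k\ge1$, $\vdash^*_{\{ub^k\}}$ is not a well quasi-order on $L^{\epsilon}_{\vdash_{\{ub^k\}}}$. Symmetrically (Lemma 9), if $u$ does not begin with $b$ and $\vdash^*_{\{u\}}$ is not a wqo on $L^{\epsilon}_{\vdash_{\{u\}}}$, then for every $k\ge1$, $\vdash^*_{\{b^ku\}}$ is not a wqo on $L^{\epsilon}_{\vdash_{\{b^ku\}}}$.
   Context: For words $u,v$, the shuffle $u \sqcup\!\sqcup v$ is the set of all words $u_1v_1\cdots u_kv_k$ with $k\ge 1$, $u=u_1\cdots u_k$, $v=v_1\cdots v_k$ (pieces possibly empty). For a finite set $I$ of words, $v \vdash_I w$ means $w \in v \sqcup\!\sqcup u$ for some $u\in I$; $\vdash_I^*$ is its reflexive-transitive closure and $L^{\epsilon}_{\vdash_I}=\{w : \epsilon \vdash_I^* w\}$. A quasi-order $\le$ on $S$ is a well quasi-order iff every infinite sequence $s_1,s_2,\dots$ in $S$ has $i<j$ with $s_i\le s_j$. *)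

(* Defs.v *)
From mathcomp Require Import all_boot.
Set Implicit Arguments. Unset Strict Implicit. Unset Printing Implicit Defensive.

Section Shuffle.
Variable A : finType.
Definition word := seq A.

Definition shuffle (u v w : word) : Prop :=
  exists (us vs : seq word),
    [/\ 0 < size us, size us = size vs, flatten us = u, flatten vs = v &
        w = flatten [seq p.1 ++ p.2 | p <- zip us vs]].

Definition step (I : seq word) (v w : word) : Prop :=
  exists2 u, u \in I & shuffle v u w.

Inductive derives (I : seq word) : word -> word -> Prop :=
  | derives_refl v : derives I v v
  | derives_step v w x : derives I v w -> step I w x -> derives I v x.

Definition Leps (I : seq word) (w : word) : Prop := derives I [::] w.

End Shuffle.

Definition wqo_on (T : Type) (le : T -> T -> Prop) (S : T -> Prop) : Prop :=
  forall s : nat -> T, (forall n, S (s n)) ->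
    exists i j, (i < j)%N /\ le (s i) (s j).

(* Main.v *)
Require Import Defs.
From mathcomp Require Import all_boot.
From mathcomp Require Import zify.
Set Implicit Arguments. Unset Strict Implicit. Unset Printing Implicit Defensive.

Inductive il {T : Type} : seq T -> seq T -> seq T -> Prop :=
| il_nil : il [::] [::] [::]
| il_l x a c d : il a c d -> il (x :: a) c (x :: d)
| il_r x a c d : il a c d -> il a (x :: c) (x :: d).

Lemma il_l0 T (a : seq T) : il a [::] a.
Proof. elim: a => [|x a IH]; [exact: il_nil | exact: il_l]. Qed.
Lemma il_r0 T (a : seq T) : il [::] a a.
Proof. elim: a => [|x a IH]; [exact: il_nil | exact: il_r]. Qed.

Lemma il_cat T (a c d a' c' d' : seq T) :
  il a c d -> il a' c' d' -> il (a ++ a') (c ++ c') (d ++ d').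
Proof.
move=> H H'; elim: H => //= [x a1 c1 d1 _ IH|x a1 c1 d1 _ IH];
 [exact: il_l | exact: il_r].
Qed.

Lemma il_rev T (a c d : seq T) : il a c d -> il (rev a) (rev c) (rev d).
Proof.
elim => [|x a1 c1 d1 _ IH|x a1 c1 d1 _ IH]; first exact: il_nil.
- rewrite !rev_cons -!cats1 -[rev c1]cats0; apply: il_cat IH _; exact: il_l0.
- rewrite !rev_cons -!cats1 -[rev a1]cats0; apply: il_cat IH _; exact: il_r0.
Qed.

Lemma shuffle_il (A : finType) (a c d : seq A) : shuffle a c d <-> il a c d.
Proof.
split.
- case=> us [vs [_ Hs <- <- ->]].
  elim: us vs Hs => [|x us IH] [|y vs] //=; first by move=> _; exact: il_nil.
  case=> /IH H; apply: il_cat H.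
  have := il_cat (il_l0 x) (il_r0 y); by rewrite cats0.
- elim => [|x a1 c1 d1 _ [us [vs [H1 H2 H3 H4 H5]]]|x a1 c1 d1 _ [us [vs [H1 H2 H3 H4 H5]]]].
  + exists [:: [::]], [:: [::]]; by split.
  + exists ([:: x] :: us), ([::] :: vs); split => //=; by rewrite ?H2 ?H3 ?H4 ?H5.
  + exists ([::] :: us), ([:: x] :: vs); split => //=; by rewrite ?H2 ?H3 ?H4 ?H5.
Qed.

Lemma il_map T U (f : T -> U) a c d : il a c d -> il (map f a) (map f c) (map f d).
Proof. elim => /= *; [exact: il_nil|exact: il_l|exact: il_r]. Qed.

Lemma il_filter T (p : pred T) a c d : il a c d -> il (filter p a) (filter p c) (filter p d).
Proof. elim => /= [|x *|x *]; [exact: il_nil| case: (p x) => //; exact: il_l | case: (p x) => //; exact: il_r]. Qed.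

Lemma il_lift T U (f : T -> U) a c d : il a c d ->
  forall A C, map f A = a -> map f C = c -> exists D, map f D = d /\ il A C D.
Proof.
elim => [|x a1 c1 d1 _ IH|x a1 c1 d1 _ IH].
- move=> [|? ?] [|? ?] // _ _; exists [::]; split => //; exact: il_nil.
- move=> [|X A] C //= [<- HA] HC; have [D [<- HD]] := IH _ _ HA HC.
  exists (X :: D); split => //; exact: il_l.
- move=> A [|Y C] //= HA [<- HC]; have [D [<- HD]] := IH _ _ HA HC.
  exists (Y :: D); split => //; exact: il_r.
Qed.

Lemma il_count T (p : pred T) a c d : il a c d -> count p d = count p a + count p c.
Proof. elim => //= [x *|x *]; lia. Qed.

Lemma il_size T (a c d : seq T) : il a c d -> size d = size a + size c.
Proof. by move=> H; rewrite -!count_predT (il_count _ H). Qed.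

Lemma il_all T (p : pred T) a c d : il a c d -> all p d = all p a && all p c.
Proof. by elim => //= [x a1 c1 d1 _ ->|x a1 c1 d1 _ ->]; case: (p x); rewrite ?andbF. Qed.

Lemma il_split T (a c Y X : seq T) : il a c (Y ++ X) ->
  exists a1 a2 c1 c2, [/\ a = a1 ++ a2, c = c1 ++ c2 & il a1 c1 Y].
Proof.
move Hd : (Y ++ X) => d H; elim: H Y Hd => [|x a1 c1 d1 _ IH|x a1 c1 d1 _ IH] [|y Y] //=.
- move=> _; exists [::], [::], [::], [::]; split => //; exact: il_nil.
- move=> _; exists [::], (x :: a1), [::], c1; split => //; exact: il_nil.
- case=> -> /IH [a2 [a3 [c2 [c3 [-> -> H]]]]].
  exists (x :: a2), a3, c2, c3; split => //; exact: il_l.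
- move=> _; exists [::], a1, [::], (x :: c1); split => //; exact: il_nil.
- case=> -> /IH [a2 [a3 [c2 [c3 [-> -> H]]]]].
  exists a2, a3, (x :: c2), c3; split => //; exact: il_r.
Qed.

Definition goodh (A : eqType) (b : A) (P : seq A) :=
  if P is z :: _ then z != b else true.

Lemma il_goodh (A : eqType) (b : A) a c d :
  il a c d -> goodh b a -> goodh b c -> goodh b d.
Proof. by elim. Qed.

Lemma derives_rev (A : finType) (w x y : seq A) :
  derives [:: w] x y -> derives [:: rev w] (rev x) (rev y).
Proof.
elim => [v|v1 w1 x1 _ IH [w' Hw' Hs]]; first exact: derives_refl.
apply: derives_step IH _; exists (rev w); first exact: mem_head.
move: Hw' Hs; rewrite mem_seq1 => /eqP -> Hs.
by apply/shuffle_il; apply: il_rev; apply/shuffle_il.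
Qed.

Lemma wqo_rev (A : finType) (w : seq A) :
  wqo_on (derives [:: w]) (Leps [:: w]) ->
  wqo_on (derives [:: rev w]) (Leps [:: rev w]).
Proof.
move=> H s Hs.
have Hs' : forall n, Leps [:: w] (rev (s n)).
  by move=> n; move: (derives_rev (Hs n)); rewrite revK.
have [i [j [Hij Hd]]] := H _ Hs'.
exists i, j; split => //; by move: (derives_rev Hd); rewrite !revK.
Qed.

Inductive TD {T : Type} (V : seq T) : seq T -> seq T -> Prop :=
| TD_refl Z : TD V Z Z
| TD_step Z W X : TD V Z W -> il W V X -> TD V Z X.

Definition tagf (A : Type) (x : seq A) := [seq (a, false) | a <- x].
Definition tv (A : Type) (b : A) k (u : seq A) := nseq k (b, true) ++ tagf u.
Definition nsnd (A : Type) (p : A * bool) := ~~ p.2.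

Lemma map_fst_tagf (A : Type) (x : seq A) : map fst (tagf x) = x.
Proof. by rewrite /tagf -map_comp map_id. Qed.

Lemma filter_tagf (A : Type) (x : seq A) : filter (@nsnd A) (tagf x) = tagf x.
Proof. by elim: x => //= a x ->. Qed.

Lemma filter_nseq_true (A : Type) (b : A) n : filter (@nsnd A) (nseq n (b, true)) = [::].
Proof. by elim: n. Qed.

Lemma filter_all_snd (A : Type) (Y : seq (A * bool)) : all snd Y -> filter (@nsnd A) Y = [::].
Proof. elim: Y => //= [[a t] Y IH] /andP [/= -> /IH]; by rewrite /nsnd /=. Qed.

Lemma cat_split T (Y X R Q : seq T) : Y ++ X = R ++ Q ->
  (exists M, Y = R ++ M /\ Q = M ++ X) \/ (exists M, R = Y ++ M /\ X = M ++ Q).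
Proof.
elim: Y R => [|y Y IH] [|r R] /=.
- move=> ->; right; by exists [::].
- move=> ->; right; by exists (r :: R).
- move=> <-; left; by exists (y :: Y).
- case=> -> /IH [[M [-> ->]]|[M [-> ->]]]; [left|right]; by exists M.
Qed.

Lemma prefix_lem (A : eqType) (b : A) (R : seq (A * bool)) (P : seq A) Y X :
  all snd R -> goodh b P -> R ++ tagf P = Y ++ X ->
  all (fun p => p.1 == b) Y -> all snd Y.
Proof.
move=> HR HP /esym /cat_split [[M [-> HQ]]|[M [HRe _]]].
- case: M HQ => [|m M]; first by rewrite cats0.
  case: P HP => [|p P] //= Hp [Hm _]; rewrite all_cat /= -Hm /= => /andP [_ /andP [Hb _]].
  by move: Hp; rewrite (eqP Hb) eqxx.
- by move: HR; rewrite HRe all_cat => /andP [].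
Qed.

Definition Inv (A : eqType) (b : A) k (u : seq A) (Z : seq (A * bool)) :=
  (forall Y X, Z = Y ++ X -> all (fun p => p.1 == b) Y -> all snd Y) /\
  count (@nsnd A) Z * (size u + k) = size Z * size u.

Lemma count_tv (A : Type) (b : A) k u : count (@nsnd A) (tv b k u) = size u.
Proof.
rewrite /tv count_cat; have -> : count (@nsnd A) (nseq k (b, true)) = 0 by elim: k.
rewrite add0n; by elim: u => //= a u ->.
Qed.

Lemma size_tv (A : Type) (b : A) k u : size (tv b k u) = k + size u.
Proof. by rewrite /tv size_cat size_nseq size_map. Qed.

Lemma all_nseq_true (A : Type) (b : A) n : all snd (nseq n (b, true)).
Proof. by elim: n. Qed.

Lemma inv_pres (A : eqType) (b : A) k u Z Z' :
  goodh b u -> TD (tv b k u) Z Z' -> Inv b k u Z -> Inv b k u Z'.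
Proof.
move=> Hu; elim => // Z0 W X _ IH Hil /IH [H1 H2]; split.
- move=> Y X' HX HY; rewrite HX in Hil.
  have [a1 [a2 [c1 [c2 [Ha Hc Hi]]]]] := il_split Hil.
  move: HY; rewrite (il_all _ Hi) => /andP [Hb1 Hb2].
  rewrite (il_all _ Hi) (H1 _ _ Ha Hb1) /=.
  apply: (prefix_lem (all_nseq_true b k) Hu _ Hb2); exact: Hc.
- rewrite (il_count _ Hil) (il_size Hil) count_tv size_tv; nia.
Qed.

Lemma inv0 (A : eqType) (b : A) k u n x :
  goodh b x -> size x = n * size u ->
  Inv b k u (nseq (k * n) (b, true) ++ tagf x).
Proof.
move=> Hx Hs; split.
- move=> Y X HZ; exact: prefix_lem (all_nseq_true b _) Hx HZ.
- rewrite count_cat size_cat size_nseq /tagf size_map.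
  have -> : count (@nsnd A) (nseq (k * n) (b, true)) = 0 by elim: (k * n).
  have -> : count (@nsnd A) [seq (a, false) | a <- x] = size x by elim: x {Hx Hs} => //= a x ->.
  rewrite Hs; nia.
Qed.

Lemma inv_final (A : eqType) (b : A) k u m y Z :
  0 < size u + k -> Inv b k u Z -> map fst Z = nseq (k * m) b ++ y ->
  size y = m * size u -> map fst (filter (@nsnd A) Z) = y.
Proof.
move=> Hpos [H1 H2] HZ Hy.
have HZ' := cat_take_drop (k * m) Z.
have Ht : map fst (take (k * m) Z) = nseq (k * m) b
  by rewrite map_take HZ take_size_cat ?size_nseq.
have Hd : map fst (drop (k * m) Z) = y
  by rewrite map_drop HZ drop_size_cat ?size_nseq.
have HY : all snd (take (k * m) Z).
  apply: (H1 _ (drop (k * m) Z)); first by rewrite HZ'.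
  rewrite -(all_map fst (fun a => a == b)) Ht all_nseq eqxx orbT //.
set Y := take _ _ in HZ' Ht HY; set X := drop _ _ in HZ' Hd.
have HcZ : count (@nsnd A) Z = count (@nsnd A) X.
  by rewrite -HZ' count_cat -size_filter (filter_all_snd HY).
have HsZ : size Z = k * m + m * size u by rewrite -(size_map fst) HZ size_cat size_nseq Hy.
have HsX : size X = m * size u by rewrite -(size_map fst) Hd.
have Hc : count (@nsnd A) X = size X.
  apply/eqP; rewrite -(eqn_pmul2r Hpos); apply/eqP; rewrite -HcZ H2 HsZ HsX; nia.
have HX : filter (@nsnd A) X = X by apply/all_filterP; rewrite all_count Hc.
by rewrite -HZ' filter_cat (filter_all_snd HY) HX.
Qed.

Lemma step1 (A : finType) (v w x : seq A) : step [:: v] w x <-> il w v x.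
Proof.
split; first by case=> v' Hv Hs; move: Hv Hs; rewrite mem_seq1 => /eqP -> /shuffle_il.
move=> H; exists v; [exact: mem_head | exact/shuffle_il].
Qed.

Lemma lift (A : finType) (b : A) k u z z' :
  derives [:: nseq k b ++ u] z z' -> forall Z, map fst Z = z ->
  exists Z', map fst Z' = z' /\ TD (tv b k u) Z Z'.
Proof.
elim => [v Z HZ|v w x _ IH /step1 Hs Z HZ]; first by exists Z; split => //; exact: TD_refl.
have [W [HW HT]] := IH _ HZ.
have Hv : map fst (tv b k u) = nseq k b ++ u by rewrite /tv map_cat map_fst_tagf map_nseq.
have [X [HX Hi]] := il_lift Hs HW Hv.
exists X; split => //; exact: TD_step HT Hi.
Qed.

Lemma proj (A : finType) (b : A) k u Z Z' :
  TD (tv b k u) Z Z' ->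
  derives [:: u] (map fst (filter (@nsnd A) Z)) (map fst (filter (@nsnd A) Z')).
Proof.
elim => [Z0|Z0 W X _ IH Hi]; first exact: derives_refl.
apply: derives_step IH _; apply/step1.
have := il_map fst (il_filter (@nsnd A) Hi).
by rewrite /tv filter_cat filter_nseq_true filter_tagf map_fst_tagf.
Qed.

Lemma Leps_lem (A : finType) (b : A) k u w :
  goodh b u -> Leps [:: u] w ->
  exists m, [/\ size w = m * size u, Leps [:: nseq k b ++ u] (nseq (k * m) b ++ w)
             & goodh b w].
Proof.
move=> Hu; rewrite /Leps; move Hv : (@nil A) => v H; elim: H Hv => [v0 <-|v0 w0 x _ IH Hs Hv]; last have {}Hs := proj1 (step1 _ _ _) Hs.
- exists 0; split => //; rewrite muln0 /=; exact: derives_refl.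
- have [m [Hsz Hd Hg]] := IH Hv.
  exists m.+1; split.
  + by rewrite (il_size Hs) Hsz mulSn addnC.
  + apply: derives_step Hd _; apply/step1.
    rewrite mulnS addnC nseqD.
    apply: il_cat; last exact: Hs.
    have := il_cat (il_l0 (nseq (k * m) b)) (il_r0 (nseq k b)); by rewrite cats0.
  + exact: il_goodh Hs Hg Hu.
Qed.

Lemma derives_nil (A : finType) (v w : seq A) : derives [:: [::]] v w -> v = [::] -> w = [::].
Proof.
elim => [v0 //|v0 w0 x _ IH Hs Hv].
have {}Hs := proj1 (step1 _ _ _) Hs.
have := il_size Hs; rewrite (IH Hv) /=; by case: x {Hs}.
Qed.

Lemma Leps_nil (A : finType) (w : seq A) : Leps [:: [::]] w -> w = [::].
Proof. by move=> H; apply: derives_nil H _. Qed.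

Lemma part2 (A : finType) (b : A) (u : seq A) :
  (forall v, u <> b :: v) ->
   ~ wqo_on (derives [:: u]) (Leps [:: u]) ->
   forall k, (1 <= k)%N ->
     ~ wqo_on (derives [:: nseq k b ++ u]) (Leps [:: nseq k b ++ u]).
Proof.
move=> Hu0 Hbad k Hk Hw; apply: Hbad => s Hs.
have Hu : goodh b u.
  move: Hu0; clear; case: u => //= z r H; apply/eqP => e; apply: (H r); by rewrite e.
have [Eu|Hne] := eqVneq u [::].
  exists 0, 1; split => //; move: Hs; rewrite Eu => Hs.
  rewrite (Leps_nil (Hs 0)) (Leps_nil (Hs 1)); exact: derives_refl.
have Hpos : 0 < size u by rewrite lt0n size_eq0.
pose m n := size (s n) %/ size u.
have Hm : forall n, [/\ size (s n) = m n * size u,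
   Leps [:: nseq k b ++ u] (nseq (k * m n) b ++ s n) & goodh b (s n)].
  move=> n; have [m' [H1 H2 H3]] := Leps_lem k Hu (Hs n).
  have Em : m n = m' by rewrite /m H1 mulnK.
  by rewrite Em.
have [i [j [Hij Hd]]] := Hw (fun n => nseq (k * m n) b ++ s n) (fun n => let: And3 _ H _ := Hm n in H).
exists i, j; split => //.
have [Hsi _ Hgi] := Hm i; have [Hsj _ _] := Hm j.
have HZ0 : map fst (nseq (k * m i) (b, true) ++ tagf (s i)) = nseq (k * m i) b ++ s i
  by rewrite map_cat map_nseq map_fst_tagf.
have [Z' [HZ' HT]] := lift Hd HZ0.
have HI := inv_pres Hu HT (inv0 k Hgi Hsi).
have Hf := inv_final (ltn_addr _ Hpos) HI HZ' Hsj.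
have := proj HT; rewrite Hf filter_cat filter_nseq_true filter_tagf map_fst_tagf //.
Qed.

Theorem lemma8 (A : finType) (b : A) (u : seq A) :
  ((forall v, u <> rcons v b) ->
   ~ wqo_on (derives [:: u]) (Leps [:: u]) ->
   forall k, (1 <= k)%N ->
     ~ wqo_on (derives [:: u ++ nseq k b]) (Leps [:: u ++ nseq k b]))
  /\
  ((forall v, u <> b :: v) ->
   ~ wqo_on (derives [:: u]) (Leps [:: u]) ->
   forall k, (1 <= k)%N ->
     ~ wqo_on (derives [:: nseq k b ++ u]) (Leps [:: nseq k b ++ u])).
Proof.
split; last exact: part2.
move=> Hu Hbad k Hk Hw.
have Hu' : forall v, rev u <> b :: v.
  move=> v e; apply: (Hu (rev v)); by rewrite -rev_cons -e revK.
have Hbad' : ~ wqo_on (derives [:: rev u]) (Leps [:: rev u]).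
  move=> H; apply: Hbad; move: (wqo_rev H); by rewrite revK.
apply: (part2 Hu' Hbad' Hk).
by move: (wqo_rev Hw); rewrite rev_cat rev_nseq.
Qed.
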